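(* Let $R$ be a finite Blaschke product and $m\ge1$. Then there exists an isomorphism of Hilbert bimodules over $A=C(\mathbb{T})$, $\Psi:X_R^{\otimes m}\to X_{R^{\circ m}}$, such that $\Psi(\xi_1\otimes\cdots\otimes\xi_m)=\xi_1\,(\xi_2\circ R)\,(\xi_3\circ R^{\circ2})\cdots(\xi_m\circ R^{\circ(m-1)})$ for $\xi_1,\dots,\xi_m\in X_R$.
   Context: A finite Blaschke product is $R(z)=\lambda\prod_{k=1}^n\frac{z-z_k}{1-\overline{z_k}z}$ with $\lambda\in\mathbb{T}$ and $z_k$ in the open unit disk; its iterates are again finite Blaschke products. For a finite Blaschke product $Q$, $X_Q=C(\mathbb{T})$ is the Hilbert bimodule over $A=C(\mathbb{T})$ with $(a\cdot\xi\cdot b)(z)=a(z)\xi(z)b(Q(z))$ and $\langle\xi,\eta\rangle_A(w)=\sum_{z\in Q^{-1}(w)}\frac{1}{|Q'(z)|}\overline{\xi(z)}\eta(z)$. $X_R^{\otimes m}$ denotes the $m$-fold interior tensor product of $X_R$ over $A$ (balanced over the right/left actions). *)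

(* Defs.v *)
From HB Require Import structures.
From mathcomp Require Import all_boot all_order all_algebra.
From mathcomp Require Import complex reals.
From Stdlib Require Import ClassicalEpsilon.
Set Implicit Arguments. Unset Strict Implicit. Unset Printing Implicit Defensive.
Import Order.TTheory GRing.Theory Num.Theory.
Local Open Scope ring_scope.

Section Defs.
Variable R : realType.
Local Notation C := R[i].

Definition onT (z : C) : Prop := `|z| = 1.

(* equality of functions on T (elements of C(T) are functions C -> C
   considered on T) *)
Definition eqT (f g : C -> C) : Prop := forall z, onT z -> f z = g z.

Definition contT (f : C -> C) : Prop :=
  forall z, onT z -> forall eps : C, 0 < eps ->
    exists2 delta : C, 0 < delta &
      forall w, onT w -> `|w - z| < delta -> `|f w - f z| < eps.

Definition blaschke (lam : C) (zs : seq C) : C -> C :=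
  fun z => lam * \prod_(a <- zs) ((z - a) / (1 - a^* * z)).

Definition is_blaschke (Q : C -> C) : Prop :=
  exists lam zs, `|lam| = 1 /\ (forall a, a \in zs -> `|a| < 1) /\
                 Q = blaschke lam zs.

Definition is_cderiv (f : C -> C) (z d : C) : Prop :=
  forall eps : C, 0 < eps -> exists2 delta : C, 0 < delta &
    forall h : C, 0 < `|h| < delta -> `|(f (z + h) - f z) / h - d| < eps.

Definition cderiv (f : C -> C) (z : C) : C :=
  epsilon (inhabits 0) (fun d => is_cderiv f z d).

Definition preimT (Q : C -> C) (w : C) : seq C :=
  epsilon (inhabits [::])
    (fun s : seq C => uniq s /\ forall z, z \in s <-> (onT z /\ Q z = w)).

Definition ipX (Q : C -> C) (xi eta : C -> C) : C -> C :=
  fun w => \sum_(z <- preimT Q w) (`|cderiv Q z|)^-1 * (xi z)^* * eta z.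

Definition iterc (k : nat) (Q : C -> C) : C -> C := fun z => iter k Q z.

(* elementary tensors xi_0 (x) ... (x) xi_{m-1} of X_R^{(x) m}, and
   formal finite sums of them (the algebraic tensor product) *)
Definition elem_tensor (m : nat) := 'I_m -> C -> C.
Definition formal_sum (m : nat) := seq (elem_tensor m).

Fixpoint valid_sum (m : nat) (s : formal_sum m) : Prop :=
  match s with
  | [::] => True
  | e :: s' => (forall i, contT (e i)) /\ valid_sum s'
  end.

(* interior tensor product inner product on elementary tensors:
   c_0 = 1, c_{k+1} = < e_k , c_k . f_k >_R, result c_m *)
Definition ip_elem (Q : C -> C) (m : nat) (e f : elem_tensor m) : C -> C :=
  foldl (fun c i => ipX Q (e i) (fun z => c z * f i z)) (fun _ => 1) (enum 'I_m).

Definition ip_tensor (Q : C -> C) (m : nat) (s t : formal_sum m) : C -> C :=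
  fun w => \sum_(e <- s) \sum_(f <- t) ip_elem Q e f w.

(* bimodule actions on X_R^{(x) m}: left on the first factor,
   right (a . xi . b)(z) = a(z) xi(z) b(R z) on the last factor *)
Definition lact_elem (m : nat) (a : C -> C) (e : elem_tensor m) : elem_tensor m :=
  fun i z => if val i == 0%N then a z * e i z else e i z.
Definition ract_elem (Q : C -> C) (m : nat) (b : C -> C) (e : elem_tensor m)
  : elem_tensor m :=
  fun i z => if val i == m.-1 then e i z * b (Q z) else e i z.

Definition psi_formula (Q : C -> C) (m : nat) (e : elem_tensor m) : C -> C :=
  fun z => \prod_(i < m) e i (iterc i Q z).

End Defs.

(* Main.v *)
Require Import Defs.
From HB Require Import structures.
From mathcomp Require Import all_boot all_order all_algebra.
From mathcomp Require Import complex reals.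
From mathcomp Require Import boolp classical_sets functions topology normedtype derive.
From Stdlib Require Import ClassicalEpsilon.
From mathcomp Require Import ring.
Import Order.TTheory GRing.Theory Num.Theory.
Import numFieldNormedType.Exports.
Local Open Scope ring_scope.
Local Open Scope classical_set_scope.

Section S.
Variable R : realType.
Local Notation C := R[i].
Definition CN := Num.NumField.sort (R[i] : numFieldType).

Lemma contT_cvg (f : C -> C) z : contT f -> onT z ->
  (f : CN -> CN) @ within (@onT R) (nbhs (z : CN)) --> (f z : CN).
Proof.
move=> cf Tz; apply/cvgrPdist_lt => eps e0.
have [d d0 Hd] := cf z Tz eps e0.
change (nbhs (z:CN) (fun t => onT t -> `|f z - f t| < eps)).
apply/nbhs_ballP; exists d => //= t /= ht Tt.
have ht' : `|z - t| < d := ht.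
by rewrite distrC; apply: Hd => //; rewrite distrC.
Qed.

Lemma cvg_contT (f : C -> C) :
  (forall z, onT z -> (f : CN -> CN) @ within (@onT R) (nbhs (z : CN)) --> (f z : CN)) -> contT f.
Proof.
move=> H z Tz eps e0.
have := (cvgrPdist_lt _ _).1 (H z Tz) eps e0.
move=> H1; have [d d0 Hd] : nbhs_ball (z:CN) (fun t => onT t -> `|f z - f t| < eps) by apply/nbhs_ballP; exact: H1.
exists d => // w Tw hw.
rewrite distrC; apply: Hd => //=. by change (`|z - w| < d); rewrite distrC.
Qed.
Lemma contT_mul (f g : C -> C) : contT f -> contT g -> contT (fun z => f z * g z).
Proof.
move=> cf cg; apply: cvg_contT => z Tz.
exact: (cvgM (contT_cvg _ _ cf Tz) (contT_cvg _ _ cg Tz)).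
Qed.

Lemma contT_add (f g : C -> C) : contT f -> contT g -> contT (fun z => f z + g z).
Proof.
move=> cf cg; apply: cvg_contT => z Tz.
exact: (cvgD (contT_cvg _ _ cf Tz) (contT_cvg _ _ cg Tz)).
Qed.

Lemma contT_cst (c : C) : contT (fun _ => c).
Proof. by move=> z _ eps e0; exists 1 => // w _ _; rewrite subrr normr0. Qed.

Definition contAt (g : C -> C) z := forall eps : C, 0 < eps ->
  exists2 d : C, 0 < d & forall w, `|w - z| < d -> `|g w - g z| < eps.

Lemma contT_comp (f g : C -> C) : contT f ->
  (forall z, onT z -> onT (g z)) -> (forall z, onT z -> contAt g z) ->
  contT (fun z => f (g z)).
Proof.
move=> cf Tg cg z Tz eps e0.
have [d1 d10 H1] := cf (g z) (Tg z Tz) eps e0.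
have [d2 d20 H2] := cg z Tz d1 d10.
exists d2 => // w Tw hw; apply: H1; [exact: Tg|exact: H2].
Qed.

Lemma diff_contAt (g : C -> C) z : differentiable (g : CN -> CN) z -> contAt g z.
Proof.
move=> /differentiable_continuous cg eps e0.
have := (cvgrPdist_lt _ _).1 cg eps e0.
move=> H1; have [d d0 Hd] : nbhs_ball (z:CN) (fun t => `|g z - g t| < eps) by apply/nbhs_ballP; exact: H1.
exists d => // w hw; rewrite distrC; apply: Hd.
by change (`|z - w| < d); rewrite distrC.
Qed.

Lemma pos_mid (a b : C) : 0 < a -> 0 < b ->
  0 < a * b / (a + b) /\ a * b / (a + b) < a /\ a * b / (a + b) < b.
Proof.
move=> a0 b0; have ab0 : 0 < a + b by rewrite addr_gt0.
split; first by rewrite divr_gt0 // mulr_gt0.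
split.
  by rewrite ltr_pdivrMr // mulrDr ltrDr mulr_gt0.
by rewrite ltr_pdivrMr // [a * b]mulrC mulrDr ltrDl mulr_gt0.
Qed.

Lemma is_cderiv_unique (f : C -> C) z d1 d2 :
  is_cderiv f z d1 -> is_cderiv f z d2 -> d1 = d2.
Proof.
move=> H1 H2; apply/eqP/negPn/negP => neq.
have e0 : 0 < `|d1 - d2| / 2 by rewrite divr_gt0 // normr_gt0 subr_eq0.
have [a a0 Ha] := H1 _ e0; have [b b0 Hb] := H2 _ e0.
have [h0 [ha hb]] := pos_mid _ _ a0 b0.
set h := a * b / (a + b) in h0 ha hb.
have nh : `|h| = h by rewrite ger0_norm // ltW.
have hh : 0 < `|h| < a by rewrite nh h0 ha.
have hh' : 0 < `|h| < b by rewrite nh h0 hb.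
have := Ha _ hh; have := Hb _ hh'.
set q := (f (z + h) - f z) / h => l2 l1.
have : `|d1 - d2| < `|d1 - d2| / 2 + `|d1 - d2| / 2.
  apply: (le_lt_trans (ler_distD q _ _)).
  by rewrite distrC ltrD.
by rewrite -splitr ltxx.
Qed.
Lemma diff_cderiv (f : C -> C) z : differentiable (f : CN -> CN) z ->
  is_cderiv f z ('D_1 (f : CN -> CN) z).
Proof.
move=> /(derivable1_diffP (f : CN -> CN)) df eps e0.
have := (cvgrPdist_lt _ _).1 df eps e0.
move=> H1.
have [d d0 Hd] : nbhs_ball (0:CN) (fun h : CN => h != 0 ->
  `|'D_1 (f : CN -> CN) z - h^-1 *: ((f \o shift z) (h *: 1) - f z)| < eps).
  by apply/nbhs_ballP; exact: H1.
exists d => // h /andP[h0 hd].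
have := Hd h; rewrite /ball /= sub0r normrN => /(_ hd).
rewrite normr_gt0 in h0; move=> /(_ h0).
rewrite (_ : h%:A = h); last exact: mulr1. by move=> H; rewrite mulrC (addrC z) distrC; exact: H.
Qed.

Lemma cderivE (f : C -> C) z : differentiable (f : CN -> CN) z ->
  cderiv f z = 'D_1 (f : CN -> CN) z.
Proof.
move=> df; have H := diff_cderiv _ _ df.
symmetry; apply: (is_cderiv_unique _ _ _ _ H).
by rewrite /cderiv; apply: epsilon_spec; exists ('D_1 (f : CN -> CN) z).
Qed.
Lemma D1_comp (f g : C -> C) x : differentiable (f : CN -> CN) x ->
  differentiable (g : CN -> CN) (f x : CN) ->
  'D_1 ((g \o f) : CN -> CN) x = 'D_1 (g : CN -> CN) (f x) * 'D_1 (f : CN -> CN) x.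
Proof.
move=> df dg.
have dgf : differentiable ((g \o f) : CN -> CN) x := differentiable_comp df dg.
have e1 := deriveE (1:CN) dgf. apply: (etrans e1). have e2 := diff_comp df dg. have e3 := congr1 (fun F => F (1:CN)) e2. apply: (etrans e3). have e4 := deriveE (1:CN) df. have e5 := deriveE (1:CN) dg. apply: (etrans (congr1 ('d (g:CN->CN) (f x : CN)) (esym e4))). have e7 : 'd (g:CN->CN) (f x : CN) ('D_1 (f:CN->CN) x *: (1:CN)) = 'D_1 (f:CN->CN) x *: 'd (g:CN->CN) (f x : CN) (1:CN) by rewrite linearZ. apply: (etrans (congr1 ('d (g:CN->CN) (f x : CN)) (esym (mulr1 ('D_1 (f:CN->CN) x))))). apply: (etrans e7). apply: (etrans (congr1 (fun y => 'D_1 (f:CN->CN) x * y) (esym e5))). exact: mulrC. Qed.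

Lemma diff_factor (a : C) (z : CN) : 1 - a^* * z != 0 ->
  differentiable ((fun y : C => (y - a) / (1 - a^* * y)) : CN -> CN) (z : CN).
Proof.
move=> H.
have did : differentiable (id : CN -> CN) z by apply: ex_diff.
have d1 : differentiable ((id \- cst a) : CN -> CN) z := differentiableB did (differentiable_cst _ _).
have d2 : differentiable ((cst (a^*) * id) : CN -> CN) z := differentiableM (differentiable_cst _ _) did.
have d3 : differentiable ((cst 1 \- (cst (a^*) * id)) : CN -> CN) z := differentiableB (differentiable_cst _ _) d2.
have d4 := differentiableV d3 H.
exact: (differentiableM d1 d4).
Qed.

Lemma diff_prod (F : C -> C -> C) (l : seq C) (z : CN) :
  (forall a, a \in l -> differentiable (F a : CN -> CN) (z : CN)) ->
  differentiable ((fun y : C => \prod_(a <- l) F a y) : CN -> CN) (z : CN).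
Proof.
elim: l => [|b l IH] H.
  have -> : (fun y : C => \prod_(a <- [::]) F a y) = cst 1.
    by apply: funext => y; rewrite big_nil.
  exact: differentiable_cst.
have -> : (fun y : C => \prod_(a <- b :: l) F a y) =
    ((F b : CN -> CN) * ((fun y : C => \prod_(a <- l) F a y) : CN -> CN)).
  by apply: funext => y; rewrite big_cons.
apply: differentiableM; first by apply: H; rewrite mem_head.
by apply: IH => a al; apply: H; rewrite in_cons al orbT.
Qed.
End S.

Set Implicit Arguments. Unset Strict Implicit.

Section B.
Variable R : realType.
Local Notation C := R[i].
Variables (lam : C) (zs : seq C).
Hypothesis hlam : `|lam| = 1.
Hypothesis hzs : forall a, a \in zs -> `|a| < 1.
Hypothesis hsz : (0 < size zs)%N.
Local Notation Q := (blaschke lam zs).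

Lemma den_neq0 (a z : C) : `|a| < 1 -> `|z| <= 1 -> 1 - a^* * z != 0.
Proof.
move=> ha hz; apply/negP; rewrite subr_eq0 => /eqP h.
have : `|a^* * z| = 1 by rewrite -h normr1.
rewrite normrM norm_conjC => e.
have : `|a| * `|z| <= `|a| by rewrite ler_piMr.
by rewrite e => /(le_lt_trans)/(_ ha); rewrite ltxx.
Qed.

Lemma den_eq (a z : C) : onT z -> `|1 - a^* * z| = `|z - a|.
Proof.
rewrite /onT => hz.
have zz : z * z^* = 1 by rewrite -normCK hz expr1n.
have -> : 1 - a^* * z = z * (z - a)^* by rewrite rmorphB mulrBr zz mulrC.
by rewrite normrM hz mul1r norm_conjC.
Qed.

Lemma Q_onT z : onT z -> onT (Q z).
Proof.
move=> hz; rewrite /onT /blaschke normrM hlam mul1r normr_prod.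
rewrite big_seq big1 // => a az.
rewrite normrM normfV den_eq // mulfV // normr_eq0 subr_eq0.
apply/negP => /eqP za; have := hzs az; rewrite -za.
by move: hz; rewrite /onT => ->; rewrite ltxx.
Qed.

Lemma iter_onT n z : onT z -> onT (iterc n Q z).
Proof. by elim: n => [//|n IH] hz; apply: Q_onT; exact: IH. Qed.

Definition pspec (f : C -> C) (w : C) (s : seq C) :=
  uniq s /\ forall z, z \in s <-> (onT z /\ f z = w).

Lemma preimT_spec (f : C -> C) w : (exists s, pspec f w s) -> pspec f w (preimT f w).
Proof. by move=> H; rewrite /preimT; apply: epsilon_spec. Qed.

Lemma Q_preim_ex w : onT w -> exists s, pspec Q w s.
Proof.
move=> hw.
pose p : {poly C} := lam *: \prod_(a <- zs) ('X - a%:P)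
                     - w *: \prod_(a <- zs) (1 - a^* *: 'X).
have pz z : p.[z] = lam * \prod_(a <- zs) (z - a) - w * \prod_(a <- zs) (1 - a^* * z).
  rewrite /p hornerD hornerN !hornerZ !horner_prod; congr (_ * _ - _ * _).
    by apply: eq_bigr => a _; rewrite hornerXsubC.
  by apply: eq_bigr => a _; rewrite hornerD hornerN hornerZ hornerX hornerC.
have p0 : p != 0.
  case: zs hzs hsz pz => // a0 l hl _ pz; apply/negP => /eqP e.
  have := pz a0; rewrite e horner0 big_cons subrr mul0r mulr0 sub0r.
  move=> /esym /eqP; rewrite oppr_eq0 mulf_eq0 => /orP [/eqP w0|].
    by move: hw; rewrite /onT w0 normr0 => /eqP; rewrite eq_sym oner_eq0.
  apply/negP; rewrite prodf_seq_neq0; apply/allP => a al /=.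
  apply: den_neq0; first exact: hl.
  by apply: ltW; apply: hl; rewrite mem_head.
have [r hr] := closed_field_poly_normal p.
have lp0 : lead_coef p != 0 by rewrite lead_coef_eq0.
exists (undup [seq x <- r | `[< onT x /\ Q x = w >]]).
split; first exact: undup_uniq.
move=> z; rewrite mem_undup mem_filter; split.
  by case/andP => /asboolP.
move=> [hz qz]; apply/andP; split; first by apply/asboolP.
have : root p z.
  rewrite /root pz; apply/eqP; move: qz; rewrite /blaschke big_split /= prodfV.
  move=> <-; rewrite -mulrA divfK ?subrr //.
  rewrite prodf_seq_neq0; apply/allP => a az /=; apply: den_neq0; first exact: hzs.
  by move: hz; rewrite /onT => ->.
by rewrite hr rootZ // root_prod_XsubC.
Qed.

Lemma iter_spec n w : onT w -> pspec (iterc n Q) w (preimT (iterc n Q) w).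
Proof.
elim: n w => [|n IH] w hw; apply: preimT_spec.
  exists [:: w]; split => // z; rewrite inE; split.
    by move=> /eqP ->.
  by case=> _ e; apply/eqP; exact: e.
have [u1 u2] := preimT_spec (Q_preim_ex hw).
exists (undup (flatten [seq preimT (iterc n Q) y | y <- preimT Q w])).
split; first exact: undup_uniq.
move=> z; rewrite mem_undup; split.
  move=> /flatten_mapP [y /u2 [hy qy] /((IH y hy).2 z) [hz qz]].
  by split => //; rewrite /iterc /= -qy -qz.
move=> [hz qz]; apply/flatten_mapP; exists (iterc n Q z).
  by apply/u2; split => //; apply: iter_onT.
by apply/((IH _ (iter_onT n hz)).2 z).
Qed.


Lemma Q_spec w : onT w -> pspec Q w (preimT Q w).
Proof. by move=> hw; apply: preimT_spec; apply: Q_preim_ex. Qed.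

Lemma sum_split n w (G : C -> C) : onT w ->
  \sum_(z <- preimT (iterc n.+1 Q) w) G z =
  \sum_(y <- preimT Q w) \sum_(z <- preimT (iterc n Q) y) G z.
Proof.
move=> hw.
have [uS hS] := iter_spec n.+1 hw.
have [uP hP] := Q_spec hw.
set S := preimT (iterc n.+1 Q) w.
set P := preimT Q w.
rewrite [RHS](eq_big_seq (fun y => \sum_(z <- S | iterc n Q z == y) G z)); last first.
  move=> y yP; rewrite -[RHS]big_filter; apply: perm_big.
  have [hy qy] := (hP y).1 yP.
  have [uY hY] := iter_spec n hy.
  apply: uniq_perm => //; first exact: filter_uniq.
  move=> z; rewrite mem_filter; apply/idP/idP.
    move=> /hY [hz qz]; apply/andP; split; first by apply/eqP.
    by apply/hS; split => //; rewrite /iterc /= -qy -qz.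
  case/andP => /eqP qz /hS [hz _]; apply/hY; split => //.
under eq_bigr do rewrite big_mkcond.
rewrite exchange_big /=; apply: eq_big_seq => z zS.
have [hz qz] := (hS z).1 zS.
have xP : iterc n Q z \in P by apply/hP; split => //; apply: iter_onT.
rewrite (bigD1_seq (iterc n Q z)) //= eqxx big1 ?addr0 // => y ne.
by rewrite eq_sym (negbTE ne).
Qed.

Lemma Q_diff (z : C) : onT z -> differentiable (Q : CN R -> CN R) (z : CN R).
Proof.
move=> hz.
have d : differentiable ((cst lam * (fun y : C => \prod_(a <- zs) ((y - a)/(1 - a^* * y)))) : CN R -> CN R) (z : CN R).
  apply: differentiableM; first exact: differentiable_cst.
  apply: diff_prod => a al; apply: diff_factor; apply: den_neq0; first exact: hzs.
  by move: hz; rewrite /onT => ->.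
exact: d.
Qed.

Lemma iter_diff n (z : C) : onT z -> differentiable (iterc n Q : CN R -> CN R) (z : CN R).
Proof.
move=> hz; elim: n => [|n IH].
  have d : differentiable (id : CN R -> CN R) (z : CN R) by apply: ex_diff.
  exact: d.
have d := differentiable_comp IH (Q_diff (iter_onT n hz)).
exact: d.
Qed.

Lemma cderiv_iter0 (z : C) : onT z -> cderiv (iterc 0 Q) z = 1.
Proof.
move=> hz; rewrite (cderivE _ _ _ (iter_diff 0 hz)).
have e := @derive_id _ _ (z : CN R) (1 : CN R). exact: e.
Qed.

Lemma cderiv_iterS n (z : C) : onT z ->
  cderiv (iterc n.+1 Q) z = cderiv Q (iterc n Q z) * cderiv (iterc n Q) z.
Proof.
move=> hz.
rewrite (cderivE _ _ _ (iter_diff n.+1 hz)) (cderivE _ _ _ (Q_diff (iter_onT n hz))).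
rewrite (cderivE _ _ _ (iter_diff n hz)).
have e := @D1_comp _ _ _ _ (iter_diff n hz) (Q_diff (iter_onT n hz)). exact: e.
Qed.

End B.

Arguments contT_cst {R}.
Arguments contT_mul {R f g}.
Arguments contT_add {R f g}.
Arguments contT_comp {R f g}.
Arguments diff_contAt {R g z}.

Section C3.
Variable R : realType.
Local Notation C := R[i].
Variables (lam : C) (zs : seq C).
Hypothesis hlam : `|lam| = 1.
Hypothesis hzs : forall a, a \in zs -> `|a| < 1.
Hypothesis hsz : (0 < size zs)%N.
Local Notation Q := (blaschke lam zs).

Definition cN n (E F : nat -> C -> C) : C -> C :=
  foldl (fun c i => ipX Q (E i) (fun z => c z * F i z)) (fun _ => 1) (iota 0 n).
Definition PE n (E : nat -> C -> C) : C -> C :=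
  fun z => \prod_(i < n) E i (iterc i Q z).

Lemma cN_eq n (E F : nat -> C -> C) w : onT w ->
  cN n E F w = ipX (iterc n Q) (PE n E) (PE n F) w.
Proof.
elim: n w => [|n IH] w hw.
  have [u h] := iter_spec hlam hzs hsz 0 hw.
  have pe : perm_eq (preimT (iterc 0 Q) w) [:: w].
    apply: uniq_perm => // z; rewrite inE; apply/idP/idP.
      by move=> /h [_ e]; apply/eqP.
    by move=> /eqP ->; apply/h.
  rewrite /ipX (perm_big _ pe) big_seq1 (cderiv_iter0 hlam hzs hw) normr1 invr1.
  by rewrite /PE !big_ord0 /cN /= rmorph1 !mul1r.
have -> : cN n.+1 E F = ipX Q (E n) (fun z => cN n E F z * F n z).
  by rewrite /cN -addn1 iotaD foldl_cat add0n.
rewrite /ipX (sum_split hlam hzs hsz n _ hw).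
apply: eq_big_seq => y yP.
have [hy qy] := ((Q_spec lam hzs hsz hw).2 y).1 yP.
rewrite (IH y hy) /ipX mulr_suml mulr_sumr.
apply: eq_big_seq => z zY.
have [hz qz] := ((iter_spec hlam hzs hsz n hy).2 z).1 zY.
rewrite (cderiv_iterS hlam hzs n hz) qz /PE !big_ord_recr /= qz.
rewrite normrM invfM !rmorphM /=.
ring.
Qed.

Definition ext m (e : elem_tensor R m) : nat -> C -> C :=
  fun i => if (insub i : option 'I_m) is Some j then e j else (fun _ => 0).

Lemma ext_val m (e : elem_tensor R m) (j : 'I_m) : ext e j = e j.
Proof. by rewrite /ext valK. Qed.

Lemma foldl_val m (g : (C -> C) -> nat -> C -> C) (s : seq 'I_m) c :
  foldl g c (map val s) = foldl (fun c i => g c (val i)) c s.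
Proof. by elim: s c => [//|i s IHs] c /=; rewrite IHs. Qed.

Lemma ip_elem_cN m (e f : elem_tensor R m) : ip_elem Q e f = cN m (ext e) (ext f).
Proof.
rewrite /ip_elem /cN -val_enum_ord foldl_val.
have -> : (fun (c : C -> C) (i : 'I_m) => ipX Q (e i) (fun z => c z * f i z)) =
          (fun c i => ipX Q (ext e (val i)) (fun z => c z * ext f (val i) z)).
  by apply: funext => c; apply: funext => i; rewrite !ext_val.
by [].
Qed.

Lemma psi_PE m (e : elem_tensor R m) : psi_formula Q e = PE m (ext e).
Proof. by apply: funext => z; rewrite /psi_formula /PE; apply: eq_bigr => i _; rewrite ext_val. Qed.

Lemma ipX_sum (f : C -> C) (I J : Type) (s : seq I) (t : seq J) g h w :
  ipX f (fun z => \sum_(i <- s) g i z) (fun z => \sum_(j <- t) h j z) w =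
  \sum_(i <- s) \sum_(j <- t) ipX f (g i) (h j) w.
Proof.
rewrite /ipX.
have E c (X : I -> C) (Y : J -> C) : c * (\sum_(i <- s) X i)^* * \sum_(j <- t) Y j =
    \sum_(i <- s) \sum_(j <- t) c * (X i)^* * Y j.
  rewrite rmorph_sum [c * _]mulr_sumr mulr_suml; apply: eq_bigr => i _.
  by rewrite mulr_sumr.
under eq_bigr do rewrite E.
rewrite exchange_big; apply: eq_bigr => i _.
by rewrite exchange_big.
Qed.

Lemma contT_ext (f g : C -> C) : contT f -> (forall z, f z = g z) -> contT g.
Proof.
move=> cf e z hz eps e0; have [d d0 H] := cf z hz eps e0.
by exists d => // w hw hd; rewrite -!e; apply: H.
Qed.

Lemma contT_prod (I : Type) (r : seq I) (F : I -> C -> C) :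
  (forall i, contT (F i)) -> contT (fun z => \prod_(i <- r) F i z).
Proof.
move=> cF; elim: r => [|i r IH].
  by apply: (contT_ext (contT_cst 1)) => z; rewrite big_nil.
apply: (contT_ext (contT_mul (cF i) IH)) => z.
by rewrite big_cons.
Qed.

Lemma contT_psi m (e : elem_tensor R m) : (forall i, contT (e i)) ->
  contT (psi_formula Q e).
Proof.
move=> ce; apply: contT_prod => i.
apply: contT_comp.
- exact: ce.
- by move=> z hz; apply: iter_onT.
- by move=> z hz; apply: diff_contAt; apply: (iter_diff hlam hzs).
Qed.

Lemma psi_lact m (hm : (1 <= m)%N) a (e : elem_tensor R m) z :
  psi_formula Q (lact_elem a e) z = a z * psi_formula Q e z.
Proof.
case: m hm e => // m _ e.
rewrite /psi_formula !big_ord_recl /= mulrA; congr (_ * _);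
  try by apply: eq_bigr => i _; rewrite /lact_elem /=.
Qed.

Lemma psi_ract m (hm : (1 <= m)%N) b (e : elem_tensor R m) z :
  psi_formula Q (ract_elem Q b e) z = psi_formula Q e z * b (iterc m Q z).
Proof.
case: m hm e => // m _ e.
rewrite /psi_formula !big_ord_recr /= /ract_elem /= eqxx mulrA; congr (_ * _);
  try by apply: eq_bigr => i _ /=; rewrite ltn_eqF.
congr (_ * _); apply: eq_bigr => i _; by rewrite ltn_eqF.
Qed.

Lemma contT_Psi m (s : formal_sum R m) : valid_sum s ->
  contT (fun z => \sum_(e <- s) psi_formula Q e z).
Proof.
elim: s => [|e s IH] /=.
  by move=> _; apply: (contT_ext (contT_cst 0)) => z; rewrite big_nil.
move=> [ce vs]; apply: (contT_ext (contT_add (contT_psi ce) (IH vs))) => z.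
by rewrite big_cons.
Qed.

Definition e_dens m (eta : C -> C) : elem_tensor R m :=
  fun i => if val i == 0%N then eta else (fun _ => 1).

Lemma psi_dens m (hm : (1 <= m)%N) eta z : psi_formula Q (@e_dens m eta) z = eta z.
Proof.
case: m hm => // m _.
by rewrite /psi_formula big_ord_recl /= big1 ?mulr1.
Qed.
End C3.

Unset Implicit Arguments.

Theorem proposition4p5 (R : realType) (lam : R[i]) (zs : seq R[i]) (m : nat) :
  `|lam| = 1 -> (forall a, a \in zs -> `|a| < 1) -> (0 < size zs)%N ->
  (1 <= m)%N ->
  let Rb := blaschke lam zs in
  let Rm := iterc m Rb in
  exists Psi : formal_sum R m -> R[i] -> R[i],
    (* formula on elementary tensors *)
    (forall e : elem_tensor R m, (forall i, contT (e i)) ->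
       eqT (Psi [:: e]) (psi_formula Rb e)) /\
    (* additivity on formal sums (C-linearity; scalars absorbed in factors) *)
    (forall s t, valid_sum s -> valid_sum t ->
       eqT (Psi (s ++ t)) (fun z => Psi s z + Psi t z)) /\
    (* values lie in X_{R^{o m}} = C(T) *)
    (forall s, valid_sum s -> contT (Psi s)) /\
    (* left A-linearity *)
    (forall a s, contT a -> valid_sum s ->
       eqT (Psi (map (lact_elem a) s)) (fun z => a z * Psi s z)) /\
    (* right A-linearity *)
    (forall b s, contT b -> valid_sum s ->
       eqT (Psi (map (ract_elem Rb b) s)) (fun z => Psi s z * b (Rm z))) /\
    (* preservation of A-valued inner products *)
    (forall s t, valid_sum s -> valid_sum t ->
       eqT (ipX Rm (Psi s) (Psi t)) (ip_tensor Rb s t)) /\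
    (* dense range in the Hilbert-module norm of X_{R^{o m}} *)
    (forall eta, contT eta -> forall eps : R[i], 0 < eps ->
       exists2 s, valid_sum s &
         forall w, onT w ->
           `|ipX Rm (fun z => eta z - Psi s z) (fun z => eta z - Psi s z) w| < eps).
Proof.
move=> hlam hzs hsz hm Rb Rm.
exists (fun s z => \sum_(e <- s) psi_formula Rb e z).
split; first by move=> e _ z _; rewrite big_seq1.
split; first by move=> s t _ _ z _; rewrite big_cat.
split.
  by move=> s vs; apply: (contT_Psi hlam hzs).
split.
  move=> a s _ _ z _; rewrite big_map mulr_sumr.
  by apply: eq_bigr => e _; rewrite psi_lact.
split.
  move=> b s _ _ z _; rewrite big_map mulr_suml.
  by apply: eq_bigr => e _; rewrite psi_ract.
split.
  move=> s t _ _ w hw; rewrite /Rm ipX_sum /ip_tensor.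
  apply: eq_bigr => e _; apply: eq_bigr => f _.
  by rewrite (ip_elem_cN lam zs e f) (cN_eq hlam hzs hsz _ _ _ hw) !psi_PE.
move=> eta ceta eps e0.
exists [:: @e_dens R m eta].
  split => // i; rewrite /e_dens; case: ifP => _; first exact: ceta.
  exact: contT_cst.
move=> w _; rewrite /ipX big1 ?normr0 // => z _.
by rewrite big_seq1 psi_dens // subrr rmorph0 !mulr0.
Qed.
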